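(* Under the standing assumptions below, the family $\mathcal U=\{I(\mathcal P):\mathcal P \text{ a finite partition of } \lambda\}$ is an ultrafilter on $\lambda$.
   Context: Standing assumptions: $G$ is a finite graph with at least one edge which is trivially power-colorable (for every positive integer $n$, every $\chi(G)$-coloring of $G^n$ is of the form $v\mapsto\phi(v_i)$ for some coordinate $i$ and proper coloring $\phi$ of $G$), $k=\chi(G)$, $\lambda$ is an infinite cardinal, and $\Phi$ is a fixed proper $k$-coloring of $G^\lambda$ (vertex set $V(G)^\lambda$, $(v_\xi)$ adjacent to $(w_\xi)$ iff $v_\xi w_\xi\in E(G)$ for all $\xi<\lambda$). A finite partition of $\lambda$ is a partition of $\lambda$ into finitely many nonempty pieces. For a finite partition $\mathcal P$, $V_{\mathcal P}=\{\mathbf v\in V(G^\lambda): \mathbf v\restriction A \text{ is constant for each } A\in\mathcal P\}$, and for $\mathbf v\in V_{\mathcal P}$, $A\in\mathcal P$, $\mathbf v_A$ is the constant value of $\mathbf v$ on $A$. If $\mathcal P=\{A_1,\dots,A_n\}$, the induced subgraph on $V_{\mathcal P}$ is isomorphic to $G^n$ via $\mathbf v\mapsto(\mathbf v_{A_1},\dots,\mathbf v_{A_n})$, so there are $i$ and a proper coloring $\phi$ of $G$ with $\Phi(\mathbf v)=\phi(\mathbf v_{A_i})$ for all $\mathbf v\in V_{\mathcal P}$; since $G$ has an edge, $A_i$ is uniquely determined and is denoted $I(\mathcal P)$. *)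

(* Defs.v *)
From HB Require Import structures.
From mathcomp Require Import all_boot.
From mathcomp Require Import boolp classical_sets cardinality filter.

Set Implicit Arguments.
Unset Strict Implicit.
Unset Printing Implicit Defensive.

Local Open Scope classical_set_scope.

Definition simple_graph (T : finType) (e : rel T) : Prop :=
  symmetric e /\ irreflexive e.

Definition proper_coloring (V C : Type) (adj : V -> V -> Prop) (c : V -> C) :=
  forall v w, adj v w -> c v <> c w.

(* Adjacency of the n-th categorical (tensor) power G^n on {ffun 'I_n -> T}. *)
Definition power_adj (T : finType) (e : rel T) (n : nat)
  (v w : {ffun 'I_n -> T}) : Prop := forall i, e (v i) (w i).

Definition bigpower_adj (T : finType) (e : rel T) (L : Type)
  (v w : L -> T) : Prop := forall x, e (v x) (w x).

Definition is_chromatic_number (T : finType) (e : rel T) (k : nat) : Prop :=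
  (exists c : T -> 'I_k, proper_coloring (fun x y => e x y) c) /\
  (forall m, (exists c : T -> 'I_m, proper_coloring (fun x y => e x y) c) ->
     (k <= m)%N).

(* Trivially power-colorable (with k = chi(G)): for every positive n, every
   proper k-coloring of G^n is v |-> phi (v i) for a coordinate i and a
   proper coloring phi of G. *)
Definition trivially_power_colorable (T : finType) (e : rel T) (k : nat) :=
  forall n : nat, (0 < n)%N ->
  forall c : {ffun 'I_n -> T} -> 'I_k,
    proper_coloring (@power_adj T e n) c ->
    exists (i : 'I_n) (phi : T -> 'I_k),
      proper_coloring (fun x y => e x y) phi /\ forall v, c v = phi (v i).

(* A finite partition of L into n nonempty pieces, given by a surjective
   labelling p : L -> 'I_n; the pieces are the fibres p^-1(j). *)
Definition finite_partition (L : Type) (n : nat) (p : L -> 'I_n) : Prop :=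
  forall j : 'I_n, exists x, p x = j.

Definition in_VP (L T : Type) (n : nat) (p : L -> 'I_n) (v : L -> T) : Prop :=
  forall x y, p x = p y -> v x = v y.

(* [is_I Phi p A] : A is the piece I(P) of the partition P given by p,
   i.e. A = p^-1(i) for an index i such that, for some proper coloring phi
   of G, Phi v = phi (v_{A}) for all v in V_P (v_A = v x for any x in A). *)
Definition is_I (T : finType) (e : rel T) (k : nat) (L : Type)
  (Phi : (L -> T) -> 'I_k) (n : nat) (p : L -> 'I_n) (A : set L) : Prop :=
  exists (i : 'I_n) (phi : T -> 'I_k),
    A = [set x | p x = i] /\
    proper_coloring (fun x y => e x y) phi /\
    forall v : L -> T, in_VP p v -> forall x, p x = i -> Phi v = phi (v x).

Definition U_family (T : finType) (e : rel T) (k : nat) (L : Type)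
  (Phi : (L -> T) -> 'I_k) : set_system L :=
  [set A | exists (n : nat) (p : L -> 'I_n),
             finite_partition p /\ is_I e Phi p A].

(* Main.v *)
Require Import Defs.
From HB Require Import structures.
From mathcomp Require Import all_boot.
From mathcomp Require Import boolp classical_sets cardinality filter.

Set Implicit Arguments.
Unset Strict Implicit.
Unset Printing Implicit Defensive.
Local Open Scope classical_set_scope.

Definition gVP (L T X : Type) (f : L -> X) (v : L -> T) : Prop :=
  forall x y, f x = f y -> v x = v y.

Definition Rep (L T X : Type) (k : nat) (Phi : (L -> T) -> 'I_k)
  (f : L -> X) (A : set L) (phi : T -> 'I_k) : Prop :=
  forall v, gVP f v -> forall x, A x -> Phi v = phi (v x).

Lemma KL_ord (T : finType) (e : rel T) (k : nat) (L : Type)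
  (Phi : (L -> T) -> 'I_k) (a b : T) (eab : e a b) :
  trivially_power_colorable e k ->
  proper_coloring (@bigpower_adj T e L) Phi ->
  forall n (p : L -> 'I_n) (x1 : L),
  exists x0 (phi : T -> 'I_k), proper_coloring (fun x y => e x y) phi /\
    Rep Phi p [set x | p x = p x0] phi.
Proof.
move=> tpc PhiP n p x1.
have n0 : (0 < n)%N by apply: leq_ltn_trans (leq0n _) (ltn_ord (p x1)).
pose embed (t : {ffun 'I_n -> T}) : L -> T := fun x => t (p x).
have cP : proper_coloring (@power_adj T e n) (fun t => Phi (embed t)).
  by move=> t w tw; apply: PhiP => x; apply: tw.
have [i [phi [phiP Hc]]] := tpc n n0 _ cP.
have [x0 px0] : exists x0, p x0 = i.
  apply: contrapT => nex.
  pose t1 : {ffun 'I_n -> T} := [ffun _ => a].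
  pose t2 : {ffun 'I_n -> T} := [ffun j => if j == i then b else a].
  have E : embed t1 = embed t2.
    apply: funext => x; rewrite /embed !ffunE.
    case: eqP => // pxi; exfalso; apply: nex; by exists x.
  apply: (phiP a b eab).
  by have := Hc t1; have := Hc t2; rewrite E !ffunE eqxx => -> ->.
exists x0, phi; split => // v vP x /= pxx0.
pose t : {ffun 'I_n -> T} := [ffun j => match pselect (exists y, p y = j) with
   | left h => v (proj1_sig (cid h)) | right _ => a end].
have tv : forall y, t (p y) = v y.
  move=> y; rewrite ffunE; case: pselect => [h|nh].
    by apply: vP; exact: (proj2_sig (cid h)).
  by exfalso; apply: nh; exists y.
have E : embed t = v by apply: funext => y; exact: tv.
by rewrite -E Hc -px0 -pxx0 /embed.
Qed.

Lemma KL_gen (T : finType) (e : rel T) (k : nat) (L : Type)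
  (Phi : (L -> T) -> 'I_k) (a b : T) (eab : e a b) :
  trivially_power_colorable e k ->
  proper_coloring (@bigpower_adj T e L) Phi ->
  forall (X : finType) (f : L -> X) (x1 : L),
  exists x0 (phi : T -> 'I_k), proper_coloring (fun x y => e x y) phi /\
    Rep Phi f [set x | f x = f x0] phi.
Proof.
move=> tpc PhiP X f x1.
have [x0 [phi [phiP R]]] :=
  KL_ord eab tpc PhiP (fun x => enum_rank (f x)) x1.
exists x0, phi; split => // v vP x /= fx.
apply: R => /=; last by rewrite fx.
by move=> y z /enum_rank_inj /vP.
Qed.

Lemma UL (T : finType) (e : rel T) (k : nat) (L : Type)
  (Phi : (L -> T) -> 'I_k) (a b : T) (eab : e a b)
  (X : finType) (f : L -> X) x y (phi phi' : T -> 'I_k) :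
  f x <> f y -> proper_coloring (fun x y => e x y) phi ->
  (forall v, gVP f v -> Phi v = phi (v x)) ->
  (forall v, gVP f v -> Phi v = phi' (v y)) -> False.
Proof.
move=> fxy phiP H1 H2.
pose v1 : L -> T := fun _ => a.
pose v2 : L -> T := fun z => if f z == f x then b else a.
have v1P : gVP f v1 by [].
have v2P : gVP f v2 by move=> z w fzw; rewrite /v2 fzw.
apply: (phiP a b eab).
have E1 := H1 v1 v1P; have E2 := H2 v1 v1P.
have E3 := H1 v2 v2P; have E4 := H2 v2 v2P.
move: E1 E2 E3 E4; rewrite /v1 /v2 eqxx.
have /negbTE -> : f y != f x by apply/eqP => h; apply: fxy.
by move=> -> -> ->.
Qed.

Lemma CL (T : finType) (e : rel T) (k : nat) (L : Type)
  (Phi : (L -> T) -> 'I_k) (a b : T) (eab : e a b)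
  (X Y : finType) (f : L -> X) (g : L -> Y) x0 y0 (phi psi : T -> 'I_k) :
  (forall x y, f x = f y -> g x = g y) ->
  proper_coloring (fun x y => e x y) phi ->
  Rep Phi f [set x | f x = f x0] phi ->
  Rep Phi g [set x | g x = g y0] psi ->
  forall x, f x = f x0 -> g x = g y0.
Proof.
move=> ref phiP R1 R2.
have gx0 : g x0 = g y0.
  apply: contrapT => ne.
  apply: (UL eab ne phiP).
    by move=> v vP; apply: R1 => //= x y /ref /vP.
  by move=> v vP; apply: R2.
by move=> x /ref ->.
Qed.

Definition U' (T : finType) (e : rel T) (k : nat) (L : Type)
  (Phi : (L -> T) -> 'I_k) : set_system L :=
  [set A | exists (X : finType) (f : L -> X) x0 (phi : T -> 'I_k),
     A = [set x | f x = f x0] /\ proper_coloring (fun x y => e x y) phi /\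
     Rep Phi f A phi].

Lemma U_eq (T : finType) (e : rel T) (k : nat) (L : Type)
  (Phi : (L -> T) -> 'I_k) : U_family e Phi = U' e Phi.
Proof.
apply/funext => A; rewrite /U_family /U' /=; apply/propext; split.
  move=> [n [p [fp [i [phi [-> [phiP R]]]]]]].
  have [x0 px0] := fp i.
  exists 'I_n, p, x0, phi; rewrite px0; split => //; split => //.
move=> [X [f [x0 [phi [-> [phiP R]]]]]].
pose S : {set X} := finset (fun y : X => `[< exists x, f x = y >]).
have Sf : forall x, f x \in S by move=> x; rewrite inE; apply/asboolP; exists x.
pose q x := enum_rank_in (Sf x0) (f x).
have qE : forall x y, q x = q y <-> f x = f y.
  move=> x y; split => [h|fxy]; last by rewrite /q fxy.
  by rewrite -(enum_rankK_in (Sf x0) (Sf x)) -(enum_rankK_in (Sf x0) (Sf y)) -/(q x) -/(q y) h.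
exists #|S|, q; split.
  move=> j; have := enum_valP j; rewrite inE => /asboolP [x fx].
  by exists x; rewrite /q fx enum_valK_in.
exists (q x0), phi; split.
  by apply/funext => x; apply/propext => /=; rewrite qE.
split => // v vP x qx; apply: R => /=; last by rewrite -qE.
by move=> y z /qE /vP.
Qed.

Lemma U'_up (T : finType) (e : rel T) (k : nat) (L : Type)
  (Phi : (L -> T) -> 'I_k) (a b : T) (eab : e a b) :
  trivially_power_colorable e k ->
  proper_coloring (@bigpower_adj T e L) Phi ->
  forall K B : set L, U' e Phi K -> K `<=` B -> U' e Phi B.
Proof.
move=> tpc PhiP K B [X [f [x0 [phi [KE [phiP R]]]]]] KB; subst K.
pose g x := (f x, `[< B x >]).
have [y0 [psi [psiP Rg]]] := KL_gen eab tpc PhiP g x0.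
have GK := CL eab (f := g) (g := f) (fun x y (H : _ = _) => congr1 fst H) psiP Rg R.
pose h x := `[< B x >].
have [z0 [chi [chiP Rh]]] := KL_gen eab tpc PhiP h x0.
have hE := CL eab (f := g) (g := h) (fun x y (H : _ = _) => congr1 snd H) psiP Rg Rh (erefl _).
have By0 : B y0 by apply: KB; exact: GK.
have hz0 : h z0 = true by rewrite -hE; apply/asboolP.
have BE : B = [set x | h x = h z0].
  by apply/funext => x; apply/propext; rewrite hz0 /=; split => /asboolP.
exists bool, h, z0, chi; split => //; split => //; rewrite BE //.
Qed.

Lemma U'_I (T : finType) (e : rel T) (k : nat) (L : Type)
  (Phi : (L -> T) -> 'I_k) (a b : T) (eab : e a b) :
  trivially_power_colorable e k ->
  proper_coloring (@bigpower_adj T e L) Phi ->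
  forall A B : set L, U' e Phi A -> U' e Phi B -> U' e Phi (A `&` B).
Proof.
move=> tpc PhiP A B [X [f [x0 [phi [AE [phiP R]]]]]]
  [Y [g [y0 [psi [BE [psiP R']]]]]]; subst A B.
pose h x := (f x, g x).
have [z0 [chi [chiP Rh]]] := KL_gen eab tpc PhiP h x0.
have H1 := CL eab (f := h) (g := f) (fun x y (H : _ = _) => congr1 fst H) chiP Rh R.
have H2 := CL eab (f := h) (g := g) (fun x y (H : _ = _) => congr1 snd H) chiP Rh R'.
apply: (U'_up eab tpc PhiP (K := [set x | h x = h z0])).
  by exists (X * Y)%type, h, z0, chi.
by move=> x hx; split; [exact: H1|exact: H2].
Qed.

Theorem mainTheorem18 (T : finType) (e : rel T) (k : nat) (L : Type)
  (Phi : (L -> T) -> 'I_k) :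
  simple_graph e ->
  (exists x y, e x y) ->
  is_chromatic_number e k ->
  trivially_power_colorable e k ->
  infinite_set [set: L] ->
  proper_coloring (@bigpower_adj T e L) Phi ->
  UltraFilter (U_family e Phi).
Proof.
move=> _ [a [b eab]] _ tpc inf PhiP.
have [x1 _] : exists x1 : L, True.
  apply: contrapT => nx; apply: inf.
  have -> : [set: L] = set0.
    by apply/funext => x; apply/propext; split => // _; apply: nx; exists x.
  exact: finite_set0.
rewrite U_eq.
have dich : forall B : set L, U' e Phi B \/ U' e Phi (~` B).
  move=> B; pose h x := `[< B x >].
  have [z0 [chi [chiP Rh]]] := KL_gen eab tpc PhiP h x1.
  have U0 : U' e Phi [set x | h x = h z0] by exists bool, h, z0, chi.
  case: (pselect (B z0)) => Bz.
    left; suff <- : [set x | h x = h z0] = B by [].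
    apply/funext => x; apply/propext; rewrite /= /h (asboolT Bz).
    by split => /asboolP.
  right; suff <- : [set x | h x = h z0] = ~` B by [].
  apply/funext => x; apply/propext; rewrite /= /h (asboolF Bz).
  by split => [hf Bx|nB]; [move: hf; rewrite asboolT | exact: asboolF].
have PF : ProperFilter (U' e Phi).
  apply: Build_ProperFilter.
    by move=> [X [f [x0 [phi [E _]]]]]; have : [set x | f x = f x0] x0 by []; rewrite -E.
  split.
  - have [z0 [chi [chiP Rh]]] := KL_gen eab tpc PhiP (fun _ : L => tt) x1.
    apply: (U'_up eab tpc PhiP (K := [set x | tt = tt])) => //.
    by exists unit, (fun _ => tt), z0, chi.
  - by move=> A B; apply: (U'_I eab tpc PhiP).
  - by move=> A B AB UA; apply: (U'_up eab tpc PhiP UA).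
split => // G PG sub.
apply/funext => B; apply/propext; split => [GB|]; last exact: sub.
case: (dich B) => // UB.
exfalso; apply: (filter_not_empty G).
rewrite -(setICr B); apply: filterI => //; exact: sub.
Qed.
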